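(* Let $\succ$ be a binary relation on $\mathcal{F}$ satisfying Axioms A1–A7 below, and define $\succsim$ on $X$ by $x\succsim y$ iff $y\not\succ x$. Then for all $f\in\mathcal{F}$ and $x,y\in X$, if $f\succ x$ and $x\succsim y$, then $f\succ y$. Axioms: (A1) $\succ$ is asymmetric and transitive, and its restriction to $X$ is non-trivial and negatively transitive. (A2) For all $f,g,h\in\mathcal{F}$, $\{\alpha\in[0,1]:\alpha f+(1-\alpha)g\succ h\}$ and $\{\alpha\in[0,1]:h\succ\alpha f+(1-\alpha)g\}$ are open in $[0,1]$. (A3) For all $f,g\in\mathcal{F}$, $x\in X$, $\alpha\in(0,1)$: $f\succ g$ iff $\alpha f+(1-\alpha)x\succ\alpha g+(1-\alpha)x$. (A4) For all $x\in X$, $\{f:f\succ x\}$ and $\{f:x\succ f\}$ are convex. (A5) If $f(s)\succ g(s)$ for all $s\in S$ then $f\succ g$. (A6) If for all $x\in X$, $f\Join x$ implies $g\Join x$, then $f\Join g$. (A7) If $f\Join x$, $x\succ g$, $g\Join y$, $f\succ y$ (with $x,y\in X$), then $f\succ g$.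
   Context: $S$ is a set of states with algebra $\Sigma$; $X$ is a non-singleton convex subset of a real vector space; $\mathcal{F}$ is the set of simple acts $f:S\to X$ ($\Sigma$-measurable, finitely many values) with pointwise mixtures; elements of $X$ are identified with constant acts. $f\Join g$ means $f\not\succ g$ and $g\not\succ f$. *)

(* Defs.v *)
From mathcomp Require Import all_boot all_order all_algebra.
From mathcomp Require Import boolp classical_sets reals.
Set Implicit Arguments. Unset Strict Implicit. Unset Printing Implicit Defensive.
Import Order.TTheory GRing.Theory Num.Theory.
Local Open Scope ring_scope.
Local Open Scope classical_set_scope.

Section Defs.
Variables (R : realType) (V : lmodType R) (S : Type).

Definition is_algebra (Sig : set (set S)) : Prop :=
  Sig setT /\ (forall A, Sig A -> Sig (~` A)) /\
  (forall A B, Sig A -> Sig B -> Sig (A `|` B)).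

Definition convex_set (X : set V) : Prop :=
  forall x y (a : R), X x -> X y -> 0 <= a <= 1 -> X (a *: x + (1 - a) *: y).

Definition non_singleton (X : set V) : Prop :=
  exists x y, X x /\ X y /\ x <> y.

Definition simple_act (Sig : set (set S)) (X : set V) (f : S -> V) : Prop :=
  (forall s, X (f s)) /\
  (exists l : seq V, forall s, f s \in l) /\
  (forall v : V, Sig (f @^-1` [set v])).

Definition cst_act (x : V) : S -> V := fun _ => x.

Definition mix (a : R) (f g : S -> V) : S -> V :=
  fun s => a *: f s + (1 - a) *: g s.

Section Prefs.
Variables (Sig : set (set S)) (X : set V) (P : (S -> V) -> (S -> V) -> Prop).
Local Notation F := (simple_act Sig X).
Definition incomp (f g : S -> V) : Prop := ~ P f g /\ ~ P g f.

Definition A1 : Prop :=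
  (forall f g, F f -> F g -> P f g -> ~ P g f) /\
  (forall f g h, F f -> F g -> F h -> P f g -> P g h -> P f h) /\
  (exists x y, X x /\ X y /\ P (cst_act x) (cst_act y)) /\
  (forall x y z, X x -> X y -> X z ->
     ~ P (cst_act x) (cst_act y) -> ~ P (cst_act y) (cst_act z) ->
     ~ P (cst_act x) (cst_act z)).

Definition open_in_unit (A : set R) : Prop :=
  forall a, 0 <= a <= 1 -> A a ->
    exists2 e : R, 0 < e & forall b, 0 <= b <= 1 -> `|b - a| < e -> A b.

Definition A2 : Prop :=
  forall f g h, F f -> F g -> F h ->
    open_in_unit [set a | 0 <= a <= 1 /\ P (mix a f g) h] /\
    open_in_unit [set a | 0 <= a <= 1 /\ P h (mix a f g)].

Definition A3 : Prop :=
  forall f g x (a : R), F f -> F g -> X x -> 0 < a < 1 ->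
    (P f g <-> P (mix a f (cst_act x)) (mix a g (cst_act x))).

Definition A4 : Prop :=
  forall x, X x ->
    (forall f g (a : R), F f -> F g -> 0 <= a <= 1 ->
       P f (cst_act x) -> P g (cst_act x) -> P (mix a f g) (cst_act x)) /\
    (forall f g (a : R), F f -> F g -> 0 <= a <= 1 ->
       P (cst_act x) f -> P (cst_act x) g -> P (cst_act x) (mix a f g)).

Definition A5 : Prop :=
  forall f g, F f -> F g ->
    (forall s, P (cst_act (f s)) (cst_act (g s))) -> P f g.

Definition A6 : Prop :=
  forall f g, F f -> F g ->
    (forall x, X x -> incomp f (cst_act x) -> incomp g (cst_act x)) ->
    incomp f g.

Definition A7 : Prop :=
  forall f g x y, F f -> F g -> X x -> X y ->
    incomp f (cst_act x) -> P (cst_act x) g -> incomp g (cst_act y) ->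
    P f (cst_act y) -> P f g.
End Prefs.
End Defs.

(* Main.v *)
Require Import Defs.
From mathcomp Require Import all_boot all_order all_algebra.
From mathcomp Require Import boolp classical_sets reals.
Local Open Scope ring_scope.
Local Open Scope classical_set_scope.

Lemma cst_simple (R : realType) (V : lmodType R) (S : Type)
  (Sig : set (set S)) (X : set V) v :
  is_algebra Sig -> X v -> simple_act Sig X (@cst_act _ _ S v).
Proof.
move=> [HT [HC _]] Xv; split; first by [].
split; first by exists [:: v] => s; rewrite inE.
move=> w; have [->|nvw] := pselect (v = w).
  suff -> : (@cst_act _ _ S w @^-1` [set w]) = setT by [].
  by apply/seteqP; split => s //=.
suff -> : (@cst_act _ _ S v @^-1` [set w]) = ~` setT by apply: HC.
by apply/seteqP; split => s //=.
Qed.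

Theorem lemma3 (R : realType) (V : lmodType R) (S : Type)
  (Sig : set (set S)) (X : set V) (P : (S -> V) -> (S -> V) -> Prop) :
  is_algebra Sig -> convex_set X -> non_singleton X ->
  A1 Sig X P -> A2 Sig X P -> A3 Sig X P -> A4 Sig X P ->
  A5 Sig X P -> A6 Sig X P -> A7 Sig X P ->
  forall (f : S -> V) (x y : V),
    simple_act Sig X f -> X x -> X y ->
    P f (cst_act x) ->
    (* x ≿ y, i.e. not (y ≻ x) *)
    ~ P (cst_act y) (cst_act x) ->
    P f (cst_act y).
Proof.
move=> Halg _ _ [asy [tr [_ ntr]]] _ _ _ _ H6 H7 f x y Ff Xx Xy Pfx nPyx.
have Fc := fun v (Xv : X v) => @cst_simple R V S Sig X v Halg Xv.
have [Pxy|nPxy] := pselect (P (@cst_act _ _ S x) (@cst_act _ _ S y)).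
  exact: (tr _ _ _ Ff (Fc _ Xx) (Fc _ Xy) Pfx Pxy).
have : ~ (forall z, X z -> incomp P f (@cst_act _ _ S z) ->
            incomp P (@cst_act _ _ S x) (@cst_act _ _ S z)).
  move=> H; have [] := H6 _ _ Ff (Fc _ Xx) H; by [].
move=> /existsNP [z /not_implyP [Xz /not_implyP [[nfz nzf] nxz]]].
have Pzx : P (@cst_act _ _ S z) (@cst_act _ _ S x).
  apply: contrapT => nzx; apply: nxz; split => // Pxz.
  by apply: nfz; apply: (tr _ _ _ Ff (Fc _ Xx) (Fc _ Xz) Pfx Pxz).
have Pzy : P (@cst_act _ _ S z) (@cst_act _ _ S y).
  apply: contrapT => nzy.
  exact: (ntr _ _ _ Xz Xy Xx nzy nPyx Pzx).
apply: (H7 _ _ z x Ff (Fc _ Xy) Xz Xx) => //.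
Qed.
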